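(* Let $\beta>0$, $g\in\mathcal C(\mathbb R^d)$, $v^*\in\mathbb R^d$, and $\rho$ a probability measure on $\mathbb R^d$ with finite first moment and $v^*\in\operatorname{supp}(\rho)$; set $g^*:=g(v^* )$, $g_r:=\sup_{v\in B_r(v^* )}g(v)-g^*$ for $r>0$, and for $\alpha>0$, $v_\alpha(\rho):=\int we^{-\alpha g(w)}d\rho(w)/\int e^{-\alpha g(w)}d\rho(w)$. (a) If there are $\eta,\nu>0$ with $g(v)-g^*\ge(\eta\|v-v^*\|_2)^{1/\nu}-\beta$ for all $v\in\mathbb R^d$, then for all $r>0$ and $q>\beta$, $$\|v_\alpha(\rho)-v^*\|_2\le\frac{(q+g_r)^\nu}{\eta}+\frac{\exp(-\alpha(q-\beta))}{\rho(B_r(v^* ))}\int\|v-v^*\|_2d\rho(v).\qquad( * )$$ (b) If there are $g_\infty,R_0,\eta>0$ and $\nu\in(0,\infty)$ with $g(v)-g^*\ge(\eta\|v-v^*\|_2)^{1/\nu}-\beta$ for all $v\in B_{R_0}(v^* )$ and $g(v)-g^*>g_\infty$ for all $v\notin B_{R_0}(v^* )$, then $( * )$ holds for all $r\in(0,R_0]$ and $q>\beta$ with $q-\beta+g_r\le g_\infty$.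
   Context: $B_r(v)$ denotes the open Euclidean ball of radius $r$ centered at $v$; $\operatorname{supp}(\rho)$ the support of $\rho$. *)

(* Defs.v *)
From HB Require Import structures.
From mathcomp Require Import all_boot all_order all_algebra.
From mathcomp Require Import all_classical all_reals all_analysis.
Set Implicit Arguments. Unset Strict Implicit. Unset Printing Implicit Defensive.
Import Order.TTheory GRing.Theory Num.Theory.
Import numFieldNormedType.Exports.
Local Open Scope classical_set_scope.
Local Open Scope ring_scope.

Definition enorm (R : realType) (d : nat) (v : 'rV[R]_d) : R :=
  Num.sqrt (\sum_(i < d) v ord0 i ^+ 2).

Definition eball (R : realType) (d : nat) (c : 'rV[R]_d) (r : R) : set 'rV[R]_d :=
  [set v | enorm (v - c) < r].

(* R^d with its Borel sigma-algebra (generated by the open sets of the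
   standard (product = Euclidean) topology on 'rV[R]_d). *)
Definition Rd (R : realType) (d : nat) :=
  g_sigma_algebraType (@open 'rV[R]_d).

Definition msupp (R : realType) (d : nat)
    (rho : {measure set (Rd R d) -> \bar R}) : set 'rV[R]_d :=
  [set x | forall r : R, 0 < r -> (0 < rho (eball x r))%E].

Definition valpha (R : realType) (d : nat)
    (rho : {measure set (Rd R d) -> \bar R}) (g : 'rV[R]_d -> R) (alpha : R)
    : 'rV[R]_d :=
  \row_(i < d)
    (Rintegral rho setT (fun w : Rd R d => w ord0 i * expR (- alpha * g w))
     / Rintegral rho setT (fun w : Rd R d => expR (- alpha * g w))).

Definition g_r (R : realType) (d : nat) (g : 'rV[R]_d -> R) (vs : 'rV[R]_d) (r : R)
    : R :=
  sup [set g v | v in eball vs r] - g vs.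

Definition rhs_bound (R : realType) (d : nat)
    (rho : {measure set (Rd R d) -> \bar R}) (g : 'rV[R]_d -> R)
    (vs : 'rV[R]_d) (beta eta nu alpha r q : R) : R :=
  powR (q + g_r g vs r) nu / eta
  + expR (- alpha * (q - beta)) / fine (rho (eball vs r))
    * Rintegral rho setT (fun v : Rd R d => enorm (v - vs)).

(* Main.v *)
Require Import Defs.
From HB Require Import structures.
From mathcomp Require Import all_boot all_order all_algebra.
From mathcomp Require Import all_classical all_reals all_analysis.
From mathcomp Require Import ring lra measurable_realfun.
Import Order.TTheory GRing.Theory Num.Theory.
Import numFieldNormedType.Exports.
Local Open Scope classical_set_scope.
Local Open Scope ring_scope.

Section aux.
Variables (R : realType) (d : nat).
Local Notation V := 'rV[R]_d.

Lemma sumsq_ge0 (v : V) : 0 <= \sum_(i < d) v ord0 i ^+ 2.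
Proof. by apply: sumr_ge0 => i _; exact: sqr_ge0. Qed.

Lemma enorm_ge0 (v : V) : 0 <= enorm v.
Proof. exact: sqrtr_ge0. Qed.

Lemma enorm_sq (v : V) : enorm v ^+ 2 = \sum_(i < d) v ord0 i ^+ 2.
Proof. by rewrite /enorm sqr_sqrtr // sumsq_ge0. Qed.

Lemma coord_le_enorm (v : V) i : `|v ord0 i| <= enorm v.
Proof.
rewrite /enorm -sqrtr_sqr ler_sqrt ?sumsq_ge0 //.
rewrite (bigD1 i) //= lerDl; apply: sumr_ge0 => j _; exact: sqr_ge0.
Qed.

Lemma CS (a b : V) : \sum_(i < d) a ord0 i * b ord0 i <= enorm a * enorm b.
Proof.
have [A0|Apos] := eqVneq (enorm a) 0.
  have H : forall i, a ord0 i = 0.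
    move=> i; apply/normr0_eq0/eqP; rewrite eq_le normr_ge0 andbT.
    by rewrite -A0 coord_le_enorm.
  by rewrite A0 mul0r big1 // => i _; rewrite H mul0r.
have [B0|Bpos] := eqVneq (enorm b) 0.
  have H : forall i, b ord0 i = 0.
    move=> i; apply/normr0_eq0/eqP; rewrite eq_le normr_ge0 andbT.
    by rewrite -B0 coord_le_enorm.
  by rewrite B0 mulr0 big1 // => i _; rewrite H mulr0.
set A := enorm a in Apos *; set B := enorm b in Bpos *.
have A0 : 0 < A by rewrite lt0r Apos enorm_ge0.
have B0 : 0 < B by rewrite lt0r Bpos enorm_ge0.
apply: (@le_trans _ _ (\sum_(i < d) ((B / A) * a ord0 i ^+ 2 + (A / B) * b ord0 i ^+ 2) / 2)).
  apply: ler_sum => i _.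
  set x := a ord0 i; set y := b ord0 i.
  have : 0 <= (B * x - A * y) ^+ 2 by exact: sqr_ge0.
  have AB : 0 < A * B by exact: mulr_gt0.
  move=> h.
  rewrite -subr_ge0.
  have -> : (B / A * x ^+ 2 + A / B * y ^+ 2) / 2 - x * y = (B * x - A * y) ^+ 2 / (2 * (A * B)).
    by field; rewrite ?gt_eqF ?mulr_gt0 ?(gt_eqF A0) ?(gt_eqF B0) //; lra.
  by apply: divr_ge0 => //; apply: mulr_ge0 => //; exact: ltW.
rewrite -mulr_suml big_split /= -!mulr_sumr -!enorm_sq -/A -/B.
rewrite le_eqVlt; apply/orP; left; apply/eqP; field; by rewrite Apos Bpos.
Qed.


Lemma enorm_triangle (a b : V) : enorm (a + b) <= enorm a + enorm b.
Proof.
have h := CS a b.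
rewrite -[X in _ <= X]ger0_norm ?addr_ge0 ?enorm_ge0 // -sqrtr_sqr /enorm ler_sqrt; last exact: sqr_ge0.
rewrite sqrrD !enorm_sq.
rewrite (eq_bigr (fun i => a ord0 i ^+ 2 + (a ord0 i * b ord0 i) *+ 2 + b ord0 i ^+ 2)); last first.
  by move=> i _; rewrite mxE sqrrD.
rewrite !big_split /= lerD2r lerD2l mulr2n; exact: lerD.
Qed.

Lemma cont_sum (I : Type) (s : seq I) (f : I -> V -> R) :
  (forall i, continuous (f i)) -> continuous (fun v => \sum_(i <- s) f i v).
Proof.
move=> hf; elim: s => [|i s IH].
  under eq_fun do rewrite big_nil; exact: cst_continuous.
under eq_fun do rewrite big_cons.
move=> x; apply: (@continuousD _ _ _ (f i) (fun v => \sum_(j <- s) f j v)); [exact: hf|exact: IH].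
Qed.

Lemma enorm_continuous : continuous (@enorm R d).
Proof.
move=> x; apply: (@continuous_comp _ _ _ (fun v : V => \sum_(i < d) v ord0 i ^+ 2) Num.sqrt).
  apply: cont_sum => i y.
  by apply: (@continuousM _ _ (fun v : V => v ord0 i) (fun v : V => v ord0 i)); exact: coord_continuous.
exact: sqrt_continuous.
Qed.

Lemma cont_meas (h : V -> R) : continuous h -> measurable_fun [set: Rd R d] (h : Rd R d -> R).
Proof.
move=> ch; apply: (@measurability _ _ (Rd R d) R _ _ _ (measurable_realfun.RGenOpens.measurableE R)).
move=> _ [_ [a [b ->] <-]]; rewrite setTI.
apply: sub_sigma_algebra.
by apply: (continuousP _).1 => //; exact: interval_open.
Qed.


Lemma mxnorm_le_enorm (v : V) : `|v| <= enorm v.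
Proof.
rewrite /Num.norm /= mx_normrE; apply: bigmax_le => [|[i j] _]; first exact: enorm_ge0.
by rewrite /= (ord1 i); exact: coord_le_enorm.
Qed.

Lemma bounded_ball_sup (g : V -> R) (vs : V) (r : R) :
  continuous g -> has_ubound [set g v | v in eball vs r].
Proof.
move=> cg.
set A := [set v : V | enorm (v - vs) <= r].
have clA : closed A.
  have -> : A = ~` [set v : V | r < enorm (v - vs)].
    by rewrite /A; apply/seteqP; split => v /= h; [apply/negP; rewrite -leNgt | rewrite leNgt; apply/negP].
  apply: open_closedC.
  have hc : continuous (fun v : V => enorm (v - vs)).
    move=> x; apply: (@continuous_comp _ _ _ (fun v : V => v - vs) (@enorm R d)).
      by apply: continuousB; [exact: cvg_id|exact: cst_continuous].
    exact: enorm_continuous.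
  exact: (continuousP _).1 hc _ (@open_gt _ r).
have bA : bounded_set A.
  exists (r + `|vs|); split; first exact: num_real.
  move=> M hM v Av; apply: ltW; apply: le_lt_trans hM.
  have -> : v = (v - vs) + vs by rewrite subrK.
  apply: le_trans (ler_normD _ _) _; rewrite lerD2r.
  exact: le_trans (mxnorm_le_enorm _) Av.
have cA : compact A by exact: bounded_closed_compact.
have cgA : compact (g @` A).
  by apply: continuous_compact => //; exact: continuous_subspaceT.
have [M [Mreal HM]] := compact_bounded cgA.
exists (M + 1) => _ [v vB <-].
have : `|g v| <= M + 1 by apply: HM; [rewrite ltrDl | exists v => //; exact: ltW].
by move/(le_trans (ler_norm _)).
Qed.

Lemma enormN (v : V) : enorm (- v) = enorm v.
Proof. by rewrite /enorm; congr Num.sqrt; apply: eq_bigr => i _; rewrite mxE sqrrN. Qed.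

Lemma cont_mul (f1 f2 : V -> R) : continuous f1 -> continuous f2 ->
  continuous (fun w => f1 w * f2 w).
Proof. by move=> c1 c2 x; apply: (@continuousM _ _ f1 f2); [exact: c1|exact: c2]. Qed.

Lemma cont_om (g : V -> R) (alpha : R) : continuous g ->
  continuous (fun w => expR (- alpha * g w)).
Proof.
move=> cg x; apply: (@continuous_comp _ _ _ g (fun t => expR (- alpha * t))); first exact: cg.
apply: (@continuous_comp _ _ _ (fun t : R => - alpha * t) expR).
  exact: mulrl_continuous.
exact: continuous_expR.
Qed.

Lemma cont_h (vs : V) : continuous (fun w : V => enorm (w - vs)).
Proof.
move=> x; apply: (@continuous_comp _ _ _ (fun v : V => v - vs) (@enorm R d)).
  by apply: continuousB; [exact: cvg_id|exact: cst_continuous].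
exact: enorm_continuous.
Qed.

Lemma coord_cont (i : 'I_d) : continuous (fun w : V => w ord0 i).
Proof. exact: coord_continuous. Qed.

End aux.
Arguments cont_meas {R d}.
Arguments bounded_ball_sup {R d}.
Arguments sumsq_ge0 {R d}.
Arguments enorm_ge0 {R d}.
Arguments enorm_sq {R d}.
Arguments coord_le_enorm {R d}.
Arguments CS {R d}.
Arguments enorm_triangle {R d}.
Arguments enorm_continuous {R d}.
Arguments mxnorm_le_enorm {R d}.
Arguments enormN {R d}.
Arguments cont_mul {R d}.
Arguments cont_om {R d}.
Arguments cont_h {R d}.
Arguments coord_cont {R d}.

Section integ.
Variables (R : realType) (d : nat) (rho : probability (Rd R d) R).
Local Notation V := 'rV[R]_d.
Hypothesis mom : (\int[rho]_(x in setT) (enorm x)%:E < +oo)%E.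

Lemma int_enorm : rho.-integrable setT (EFin \o (fun w : Rd R d => enorm w)).
Proof.
apply/integrableP; split.
  by apply/measurable_EFinP; exact: (cont_meas _ (@enorm_continuous R d)).
apply: le_lt_trans mom; rewrite le_eqVlt; apply/orP; left; apply/eqP; apply: eq_integral => x _ /=.
by rewrite ger0_norm ?enorm_ge0.
Qed.

Lemma int_bound (f : V -> R) a b : continuous f ->
  (forall w, `|f w| <= a * enorm w + b) ->
  rho.-integrable setT (EFin \o (f : Rd R d -> R)).
Proof.
move=> cf hb.
apply: (@le_integrable _ _ _ rho setT measurableT _ (EFin \o (fun w : Rd R d => a * enorm w + b))).
- by apply/measurable_EFinP; exact: (cont_meas _ cf).
- move=> x _ /=; rewrite lee_fin; apply: le_trans (hb x) (ler_norm _).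
apply: (@eq_integrable _ _ _ rho setT measurableT
   ((fun x => (a%:E * (EFin \o (fun w : Rd R d => enorm w)) x)%E) \+ (EFin \o cst b))%E).
  by move=> x _ /=; rewrite EFinD EFinM.
apply: integrableD => //; last exact: finite_measure_integrable_cst.
exact: integrableZl int_enorm.
Qed.



Lemma Rint_sum (I : Type) (s : seq I) (F : I -> Rd R d -> R) :
  (forall i, rho.-integrable setT (EFin \o F i)) ->
  rho.-integrable setT (EFin \o (fun w => \sum_(i <- s) F i w)) /\
  Rintegral rho setT (fun w => \sum_(i <- s) F i w) = \sum_(i <- s) Rintegral rho setT (F i).
Proof.
move=> hF; elim: s => [|i s [IH1 IH2]].
  have -> : (fun w => \sum_(i <- [::]) F i w) = fun=> 0.
    by apply: funext => w; rewrite big_nil.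
  split; first exact: finite_measure_integrable_cst.
  by rewrite big_nil Rintegral_cst // mul0r.
have -> : (fun w => \sum_(j <- i :: s) F j w) = fun w => F i w + \sum_(j <- s) F j w.
  by apply: funext => w; rewrite big_cons.
split.
  apply: (@eq_integrable _ _ _ rho setT measurableT ((EFin \o F i) \+ (EFin \o (fun w => (\sum_(j <- s) F j w)%R)))%E).
    by move=> x _ /=; rewrite EFinD.
  exact: integrableD.
by rewrite RintegralD // IH2 big_cons.
Qed.

Lemma key (g : V -> R) (vs : V) (beta alpha r q rt : R) :
  continuous g -> vs \in msupp rho -> 0 < alpha -> 0 < r -> 0 <= rt ->
  (forall v, g vs - beta <= g v) ->
  (forall v, rt <= enorm (v - vs) -> g vs + (q + g_r g vs r - beta) <= g v) ->
  enorm (valpha rho g alpha - vs) <= rt + expR (- alpha * (q - beta)) / fine (rho (eball vs r))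
     * Rintegral rho setT (fun v : Rd R d => enorm (v - vs)).
Proof.
move=> cg vsupp a0 r0 rt0 glb gfar.
set om := fun w : V => expR (- alpha * g w).
have om_cont : continuous om by exact: cont_om.
have om_pos : forall w, 0 < om w by move=> w; exact: expR_gt0.
set Mw := expR (- alpha * (g vs - beta)).
have Mw0 : 0 <= Mw by exact: expR_ge0.
have om_le : forall w, om w <= Mw.
  by move=> w; rewrite /om /Mw ler_expR !mulNr lerN2 ler_pM2l.
have int_om : rho.-integrable setT (EFin \o (om : Rd R d -> R)).
  apply: (@int_bound om 0 Mw om_cont) => w.
  by rewrite mul0r add0r ger0_norm ?om_le // ltW.
set h := fun w : V => enorm (w - vs).
have h_cont : continuous h by exact: cont_h.
have h0 : forall w, 0 <= h w by move=> w; exact: enorm_ge0.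
have h_le : forall w, h w <= enorm w + enorm vs.
  by move=> w; rewrite /h -(enormN vs); exact: enorm_triangle.
have int_h : rho.-integrable setT (EFin \o (h : Rd R d -> R)).
  apply: (@int_bound h 1 (enorm vs) h_cont) => w.
  by rewrite mul1r ger0_norm ?h0 ?h_le.
have hom_bd : forall w, `|h w * om w| <= Mw * enorm w + Mw * enorm vs.
  move=> w; rewrite normrM !ger0_norm ?h0 ?(ltW (om_pos w)) // -mulrDr mulrC.
  apply: le_trans (ler_wpM2l Mw0 (h_le w)).
  by apply: ler_wpM2r; [exact: h0|exact: om_le].
have int_hom : rho.-integrable setT (EFin \o (fun w : Rd R d => h w * om w)).
  apply: (@int_bound (fun w => h w * om w) Mw (Mw * enorm vs)); last exact: hom_bd.
  exact: cont_mul.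
set f := fun (i : 'I_d) (w : V) => w ord0 i * om w.
have int_f : forall i, rho.-integrable setT (EFin \o (f i : Rd R d -> R)).
  move=> i; apply: (@int_bound (f i) Mw 0); first by apply: cont_mul => //; exact: coord_cont.
  move=> w; rewrite addr0 /f normrM (ger0_norm (ltW (om_pos w))) mulrC.
  apply: le_trans (ler_wpM2l Mw0 (coord_le_enorm w i)).
  by apply: ler_wpM2r; [exact: normr_ge0|exact: om_le].
set k := fun (i : 'I_d) (w : V) => (w ord0 i - vs ord0 i) * om w.
have k_bd : forall i w, `|k i w| <= h w * om w.
  move=> i w; rewrite /k normrM (ger0_norm (ltW (om_pos w))).
  apply: ler_wpM2r; first exact: ltW.
  have H := coord_le_enorm (w - vs) i; rewrite !mxE in H; exact: H.
have int_k : forall i, rho.-integrable setT (EFin \o (k i : Rd R d -> R)).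
  move=> i; apply: (@int_bound (k i) Mw (Mw * enorm vs)).
    by apply: cont_mul => // x; apply: (@continuousB _ _ _ (fun w : V => w ord0 i)); [exact: coord_cont|exact: cst_continuous].
  by move=> w; apply: le_trans (k_bd i w) _; apply: le_trans (hom_bd w); exact: ler_norm.
set Z := Rintegral rho setT (om : Rd R d -> R).
set P := fine (rho (eball vs r)).
have Bmeas : measurable (eball vs r : set (Rd R d)).
  apply: sub_sigma_algebra.
  exact: (continuousP _).1 (cont_h vs) _ (@open_lt _ r).
have P0 : 0 < P.
  apply: fine_gt0; apply/andP; split.
    by move: vsupp; rewrite inE => /(_ r r0).
  by apply: le_lt_trans (probability_le1 rho Bmeas) _; exact: ltey.
have ub := bounded_ball_sup g vs r cg.
set er := expR (- alpha * (g vs + g_r g vs r)).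
have er0 : 0 < er by exact: expR_gt0.
have Zlb : er * P <= Z.
  have int_ind : rho.-integrable setT (EFin \o (\1_(eball vs r) : Rd R d -> R)).
    apply: (@le_integrable _ _ _ rho setT measurableT _ (EFin \o cst 1)).
    - by apply/measurable_EFinP; exact: measurable_indic.
    - move=> x _ /=; rewrite lee_fin /indic; case: (_ \in _) => /=; rewrite ?normr0 ?normr1 //.
    - exact: finite_measure_integrable_cst.
  have -> : er * P = Rintegral rho setT (fun w => er * \1_(eball vs r) w).
    rewrite RintegralZl //; congr (_ * _).
    by rewrite /Rintegral integral_indic // setIT.
  apply: le_Rintegral => //.
    apply: (@eq_integrable _ _ _ rho setT measurableT (fun x => (er%:E * (EFin \o \1_(eball vs r)) x)%E)).
    - by move=> x _ /=; rewrite EFinM.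
    - exact: integrableZl.
  move=> w _; rewrite /indic; case: (boolP (w \in eball vs r)) => wB; last by rewrite mulr0n mulr0; exact: expR_ge0.
  rewrite mulr1n mulr1 /er /om ler_expR !mulNr lerN2 ler_pM2l //.
  rewrite /g_r addrC subrK; apply: ub_le_sup => //; exists w => //.
  by move: wB; rewrite inE.
have Z0 : 0 < Z by apply: lt_le_trans Zlb; exact: mulr_gt0.
set x := valpha rho g alpha - vs.
have int_vom : forall c, rho.-integrable setT (EFin \o (fun w : Rd R d => c * om w)).
  move=> c; apply: (@eq_integrable _ _ _ rho setT measurableT (fun w => (c%:E * (EFin \o (om : Rd R d -> R)) w)%E)).
    by move=> w _ /=; rewrite EFinM.
  exact: integrableZl.
have xi : forall i, x ord0 i = Rintegral rho setT (k i : Rd R d -> R) / Z.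
  move=> i.
  transitivity (Rintegral rho setT (f i : Rd R d -> R) / Z - vs ord0 i); first by rewrite /x /valpha !mxE.
  have -> : Rintegral rho setT (k i : Rd R d -> R) = Rintegral rho setT (f i : Rd R d -> R) - vs ord0 i * Z.
    rewrite -RintegralZl // -RintegralB //; try exact: int_f; try exact: int_vom.
    by apply: eq_Rintegral => w _; rewrite /k /f mulrBl.
  by field; exact: lt0r_neq0.
have int_xk : forall i, rho.-integrable setT (EFin \o (fun w : Rd R d => x ord0 i * k i w)).
  move=> i; apply: (@eq_integrable _ _ _ rho setT measurableT (fun w => ((x ord0 i)%:E * (EFin \o (k i : Rd R d -> R)) w)%E)).
    by move=> w _ /=; rewrite EFinM.
  exact: integrableZl.
have [int_sum Isum] := @Rint_sum 'I_d (index_enum 'I_d) (fun i (w : Rd R d) => x ord0 i * k i w) int_xk.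
have key1 : enorm x ^+ 2 <= enorm x * (Rintegral rho setT (fun w : Rd R d => h w * om w) / Z).
  rewrite enorm_sq.
  have -> : \sum_(i < d) x ord0 i ^+ 2 = Rintegral rho setT (fun w : Rd R d => \sum_(i <- index_enum 'I_d) x ord0 i * k i w) / Z.
    rewrite Isum mulr_suml; apply: eq_bigr => i _.
    by rewrite RintegralZl // expr2 {2}(xi i) mulrA.
  rewrite mulrA; apply: ler_wpM2r; first by rewrite invr_ge0 ltW.
  rewrite -RintegralZl //.
  apply: le_Rintegral => //; try exact: int_sum.
    apply: (eq_integrable measurableT _ _ _ (integrableZl measurableT (enorm x) int_hom)).
    by move=> w _ /=; rewrite EFinM.
  move=> w _.
  have -> : \sum_(i <- index_enum 'I_d) x ord0 i * k i w = (\sum_(i < d) x ord0 i * (w - vs) ord0 i) * om w.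
    by rewrite mulr_suml; apply: eq_bigr => i _; rewrite /k !mxE mulrA.
  rewrite mulrA; apply: ler_wpM2r; first exact: ltW.
  exact: CS.
have hx : enorm x <= Rintegral rho setT (fun w : Rd R d => h w * om w) / Z.
  have [x0|xpos] := eqVneq (enorm x) 0.
    rewrite x0; apply: divr_ge0; last exact: ltW.
    by apply: Rintegral_ge0 => w _; apply: mulr_ge0 => //; exact: ltW.
  have xp : 0 < enorm x by rewrite lt0r xpos enorm_ge0.
  by rewrite -(ler_pM2l xp) -expr2.
set Eq := expR (- alpha * (g vs + (q + g_r g vs r - beta))).
have Eq0 : 0 <= Eq by exact: expR_ge0.
set Ih := Rintegral rho setT (h : Rd R d -> R).
have Ih0 : 0 <= Ih by apply: Rintegral_ge0 => w _; exact: h0.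
have hIh : Rintegral rho setT (fun w : Rd R d => h w * om w) <= rt * Z + Eq * Ih.
  rewrite -RintegralZl // -RintegralZl // -RintegralD //; last first.
    apply: (@eq_integrable _ _ _ rho setT measurableT (fun w => (Eq%:E * (EFin \o (h : Rd R d -> R)) w)%E)).
      by move=> w _ /=; rewrite EFinM.
    exact: integrableZl.
  apply: le_Rintegral => //.
    apply: (@eq_integrable _ _ _ rho setT measurableT ((fun w => (rt%:E * (EFin \o (om : Rd R d -> R)) w)) \+ (fun w => (Eq%:E * (EFin \o (h : Rd R d -> R)) w)))%E).
      by move=> w _ /=; rewrite EFinD !EFinM.
    by apply: integrableD => //; exact: integrableZl.
  move=> w _; have [far|near] := leP rt (h w).
    have omE : om w <= Eq.
      by rewrite /om /Eq ler_expR !mulNr lerN2 ler_pM2l //; exact: gfar.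
    apply: le_trans (_ : Eq * h w <= _); last by rewrite lerDr; apply: mulr_ge0 => //; exact: ltW.
    by rewrite mulrC; apply: ler_wpM2r; [exact: h0 | exact: omE].
  apply: le_trans (_ : rt * om w <= _); last by rewrite lerDl; apply: mulr_ge0 => //; exact: h0.
  by apply: ler_wpM2r; [exact: ltW | exact: ltW].
apply: (le_trans hx).
rewrite ler_pdivrMr //.
apply: (le_trans hIh).
rewrite mulrDl lerD2l.
have EE : Eq = expR (- alpha * (q - beta)) * er.
  by rewrite /Eq /er -expRD; congr expR; ring.
rewrite EE.
apply: le_trans (_ : expR (- alpha * (q - beta)) / P * Ih * (er * P) <= _).
  rewrite le_eqVlt; apply/orP; left; apply/eqP; field; exact: lt0r_neq0.
apply: ler_wpM2l => //.
by apply: mulr_ge0 => //; apply: divr_ge0; [exact: expR_ge0 | exact: ltW].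
Qed.

End integ.

Lemma far_bound (R : realType) (eta nu c t : R) : 0 < eta -> 0 < nu -> 0 <= c ->
  powR c nu / eta <= t -> c <= powR (eta * t) (1 / nu).
Proof.
move=> e0 n0 c0 ht.
have h1 : powR c nu <= eta * t by rewrite mulrC -ler_pdivrMr.
have -> : c = powR (powR c nu) (1 / nu).
  by rewrite -powRrM mul1r mulfV ?powRr1 // gt_eqF.
apply: ge0_ler_powR => //.
- by rewrite divr_ge0 // ltW.
- by rewrite nnegrE powR_ge0.
- by rewrite nnegrE; apply: le_trans h1; exact: powR_ge0.
Qed.

Lemma gr_ge0 (R : realType) (d : nat) (g : 'rV[R]_d -> R) (vs : 'rV[R]_d) (r : R) :
  continuous g -> 0 < r -> 0 <= g_r g vs r.
Proof.
move=> cg r0; rewrite /g_r subr_ge0.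
apply: ub_le_sup; first exact: bounded_ball_sup.
exists vs => //; rewrite /eball /= subrr /enorm big1 ?sqrtr0 // => i _.
by rewrite mxE expr0n.
Qed.

Theorem mainTheorem16 (R : realType) (d : nat) (beta : R) (g : 'rV[R]_d -> R)
    (vs : 'rV[R]_d) (rho : probability (Rd R d) R) :
  0 < beta ->
  continuous g ->
  (\int[rho]_(x in setT) (enorm x)%:E < +oo)%E ->
  vs \in msupp rho ->
  (* (a) *)
  (forall eta nu : R, 0 < eta -> 0 < nu ->
     (forall v : 'rV[R]_d,
        g v - g vs >= powR (eta * enorm (v - vs)) (1 / nu) - beta) ->
     forall alpha r q : R, 0 < alpha -> 0 < r -> beta < q ->
       enorm (valpha rho g alpha - vs)
         <= rhs_bound rho g vs beta eta nu alpha r q)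
  /\
  (* (b) *)
  (forall ginf R0 eta nu : R, 0 < ginf -> 0 < R0 -> 0 < eta -> 0 < nu ->
     (forall v : 'rV[R]_d, eball vs R0 v ->
        g v - g vs >= powR (eta * enorm (v - vs)) (1 / nu) - beta) ->
     (forall v : 'rV[R]_d, ~ eball vs R0 v -> g v - g vs > ginf) ->
     forall alpha r q : R, 0 < alpha -> 0 < r -> r <= R0 -> beta < q ->
       q - beta + g_r g vs r <= ginf ->
       enorm (valpha rho g alpha - vs)
         <= rhs_bound rho g vs beta eta nu alpha r q).
Proof.
move=> b0 cg mom vsupp; split.
  move=> eta nu e0 n0 H alpha r q a0 r0 bq.
  have gr0 := @gr_ge0 R d g vs r cg r0.
  have c0 : 0 <= q + g_r g vs r by rewrite addr_ge0 // ltW // (lt_trans b0).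
  rewrite /rhs_bound; apply: (@key R d rho mom) => //.
  - by apply: divr_ge0; [exact: powR_ge0 | exact: ltW].
  - move=> v; have := H v; have := powR_ge0 (eta * enorm (v - vs)) (1 / nu).
    by move=> p0 hv; lra.
  - move=> v hv; have := H v; have := @far_bound R _ _ _ _ e0 n0 c0 hv.
    by move=> h1 h2; lra.
move=> ginf R0 eta nu gi0 R00 e0 n0 Hin Hout alpha r q a0 r0 rR bq hg.
have gr0 := @gr_ge0 R d g vs r cg r0.
have c0 : 0 <= q + g_r g vs r by rewrite addr_ge0 // ltW // (lt_trans b0).
rewrite /rhs_bound; apply: (@key R d rho mom) => //.
- by apply: divr_ge0; [exact: powR_ge0 | exact: ltW].
- move=> v; case: (pselect (eball vs R0 v)) => vB.
    have := Hin v vB; have := powR_ge0 (eta * enorm (v - vs)) (1 / nu).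
    by move=> p0 hv; lra.
  by have := Hout v vB => hv; lra.
- move=> v hv; case: (pselect (eball vs R0 v)) => vB.
    have := Hin v vB; have := @far_bound R _ _ _ _ e0 n0 c0 hv.
    by move=> h1 h2; lra.
  by have := Hout v vB => h2; lra.
Qed.
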